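(* Let $A$ be a metabelian Lie $U$-algebra over a field $k$ and let $B$ be a subalgebra of $A$. Then $B$ is a $U$-algebra.
   Context: A Lie algebra is metabelian if $(a\circ b)\circ(c\circ d)=0$ identically; $\mathrm{Fit}(A)$ is the ideal generated by all elements lying in nilpotent ideals of $A$. If $\mathrm{Fit}(A)$ is abelian, choose $\{a_\alpha:\alpha\in\Lambda\}\subseteq A$ whose images form a basis of $A/\mathrm{Fit}(A)$, let $R=k[x_\alpha:\alpha\in\Lambda]$, and make $\mathrm{Fit}(A)$ an $R$-module via $b\cdot x_\alpha=b\circ a_\alpha$ (extended multiplicatively and linearly). $A$ is a $U$-algebra if $\mathrm{Fit}(A)$ is abelian and a torsion-free $R$-module. *)

(* Defs.v *)
From HB Require Import structures.
From mathcomp Require Import all_boot all_order all_algebra.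
From mathcomp Require Import mpoly.
Set Implicit Arguments. Unset Strict Implicit. Unset Printing Implicit Defensive.
Import GRing.Theory.
Local Open Scope ring_scope.

Section LieDefs.
Variables (k : fieldType) (A : lmodType k) (br : A -> A -> A).

Definition lie_bracket : Prop :=
  (forall (c : k) (x y z : A), br (c *: x + y) z = c *: br x z + br y z) /\
  (forall (c : k) (x y z : A), br z (c *: x + y) = c *: br z x + br z y) /\
  (forall x : A, br x x = 0) /\
  (forall x y z : A, br x (br y z) + br y (br z x) + br z (br x y) = 0).

Definition metabelian : Prop :=
  forall a b c d : A, br (br a b) (br c d) = 0.

Definition subspace (V : A -> Prop) : Prop :=
  V 0 /\ forall (c : k) x y, V x -> V y -> V (c *: x + y).

Definition subalgebra (S : A -> Prop) : Prop :=
  subspace S /\ forall x y, S x -> S y -> S (br x y).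

Definition ideal (S I : A -> Prop) : Prop :=
  (forall x, I x -> S x) /\ subspace I /\ forall x y, I x -> S y -> I (br x y).

Definition span (P : A -> Prop) : A -> Prop :=
  fun x => forall V, subspace V -> (forall y, P y -> V y) -> V x.

(* lower central series of I: lcs I 0 = I^1 = I, lcs I (n+1) = I^(n+2) = [I^(n+1), I] *)
Fixpoint lcs (I : A -> Prop) (n : nat) : A -> Prop :=
  match n with
  | O => I
  | S n' => span (fun z => exists x y, lcs I n' x /\ I y /\ z = br x y)
  end.

Definition nilpotent_ideal (S I : A -> Prop) : Prop :=
  ideal S I /\ exists n, forall x, lcs I n x -> x = 0.

Definition Fit (S : A -> Prop) : A -> Prop :=
  fun x => forall J, ideal S J ->
    (forall y, (exists I, nilpotent_ideal S I /\ I y) -> J y) -> J x.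

Definition Fit_abelian (S : A -> Prop) : Prop :=
  forall x y, Fit S x -> Fit S y -> br x y = 0.

Definition basis_mod_Fit (S : A -> Prop) (Lambda : Type) (a : Lambda -> A) : Prop :=
  (forall al, S (a al)) /\
  (forall n (tau : 'I_n -> Lambda) (c : 'I_n -> k), injective tau ->
      Fit S (\sum_(i < n) c i *: a (tau i)) -> forall i, c i = 0) /\
  (forall s, S s -> exists n (tau : 'I_n -> Lambda) (c : 'I_n -> k),
      Fit S (s - \sum_(i < n) c i *: a (tau i))).

(* Action of the monomial prod_i x_(sigma i)^(m i) on b, where b . x_al = b o a_al *)
Definition mon_act (Lambda : Type) (a : Lambda -> A) n (sigma : 'I_n -> Lambda)
  (m : 'X_{1..n}) (b : A) : A :=
  foldr (fun i y => iter (m i) (fun z => br z (a (sigma i))) y) b (enum 'I_n).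

(* Action of p in k[x_(sigma 0), ..., x_(sigma (n-1))] (a subring of R = k[x_al]) *)
Definition poly_act (Lambda : Type) (a : Lambda -> A) n (sigma : 'I_n -> Lambda)
  (p : {mpoly k[n]}) (b : A) : A :=
  \sum_(m <- msupp p) p@_m *: mon_act a sigma m b.

(* Fit(S) is a torsion-free R-module: every element of R lies in
   k[x_(sigma 0),...,x_(sigma (n-1))] for some injective sigma. *)
Definition torsion_free (S : A -> Prop) (Lambda : Type) (a : Lambda -> A) : Prop :=
  forall n (sigma : 'I_n -> Lambda), injective sigma ->
  forall p : {mpoly k[n]}, p != 0 ->
  forall b, Fit S b -> b <> 0 -> poly_act a sigma p b <> 0.

Definition U_algebra (S : A -> Prop) : Prop :=
  Fit_abelian S /\
  forall (Lambda : Type) (a : Lambda -> A), basis_mod_Fit S a -> torsion_free S a.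

End LieDefs.

(* Main.v *)
Require Import Defs.
From mathcomp Require Import all_boot all_order all_algebra.
From mathcomp Require Import mpoly.
From mathcomp Require classical_sets.
From Stdlib Require Import Classical ProofIrrelevance.
Set Implicit Arguments. Unset Strict Implicit. Unset Printing Implicit Defensive.
Import GRing.Theory.
Local Open Scope ring_scope.



Section Basic.
Variables (k : fieldType) (A : lmodType k).

Lemma subspace0 (V : A -> Prop) : subspace V -> V 0.
Proof. by case. Qed.
Lemma subspaceD (V : A -> Prop) x y : subspace V -> V x -> V y -> V (x + y).
Proof. by case=> _ H Hx Hy; have := H 1 _ _ Hx Hy; rewrite scale1r. Qed.
Lemma subspaceZ (V : A -> Prop) c x : subspace V -> V x -> V (c *: x).
Proof. by case=> H0 H Hx; have := H c _ _ Hx H0; rewrite addr0. Qed.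
Lemma subspaceN (V : A -> Prop) x : subspace V -> V x -> V (- x).
Proof. by move=> HV Hx; rewrite -scaleN1r; apply: subspaceZ. Qed.
Lemma subspaceB (V : A -> Prop) x y : subspace V -> V x -> V y -> V (x - y).
Proof. by move=> HV Hx Hy; apply: subspaceD => //; apply: subspaceN. Qed.
Lemma subspace_sum (V : A -> Prop) (I : Type) (r : seq I) (P : pred I) (f : I -> A) :
  subspace V -> (forall i, P i -> V (f i)) -> V (\sum_(i <- r | P i) f i).
Proof.
move=> HV Hf; elim: r => [|i r IH]; first by rewrite big_nil; apply: subspace0.
rewrite big_cons; case: ifP => Pi //; exact: subspaceD (Hf _ Pi) IH.
Qed.
Lemma subspaceI (V W : A -> Prop) : subspace V -> subspace W -> subspace (fun x => V x /\ W x).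
Proof.
move=> [V0 HV] [W0 HW]; split=> // c x y [? ?] [? ?]; split; [exact: HV|exact: HW].
Qed.
Lemma subspace_zero : subspace (fun x : A => x = 0).
Proof. by split=> // c x y -> ->; rewrite scaler0 addr0. Qed.
Lemma subspace_True : subspace (fun _ : A => True).
Proof. by []. Qed.

Variable br : A -> A -> A.
Hypothesis HL : lie_bracket br.

Lemma br0l z : br 0 z = 0.
Proof.
case: HL => H _; have := H 1 0 0 z; rewrite !scale1r addr0 => E.
by apply: (@addrI _ (br 0 z)); rewrite addr0 -E.
Qed.
Lemma br0r z : br z 0 = 0.
Proof.
case: HL => _ [H _]; have := H 1 0 0 z; rewrite !scale1r addr0 => E.
by apply: (@addrI _ (br z 0)); rewrite addr0 -E.
Qed.
Lemma brDl x y z : br (x + y) z = br x z + br y z.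
Proof. by case: HL => H _; have := H 1 x y z; rewrite !scale1r. Qed.
Lemma brDr x y z : br z (x + y) = br z x + br z y.
Proof. by case: HL => _ [H _]; have := H 1 x y z; rewrite !scale1r. Qed.
Lemma brZl c x z : br (c *: x) z = c *: br x z.
Proof. by case: HL => H _; have := H c x 0 z; rewrite addr0 br0l addr0. Qed.
Lemma brZr c x z : br z (c *: x) = c *: br z x.
Proof. by case: HL => _ [H _]; have := H c x 0 z; rewrite addr0 br0r addr0. Qed.
Lemma brxx x : br x x = 0.
Proof. by case: HL => _ [_ [H _]]. Qed.
Lemma br_anti x y : br x y = - br y x.
Proof.
apply/eqP; rewrite -subr_eq0 opprK.
have := brxx (x + y); rewrite brDl !brDr !brxx add0r addr0 => ->.
done.
Qed.
Lemma brNl x z : br (- x) z = - br x z.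
Proof. by rewrite -scaleN1r brZl scaleN1r. Qed.
Lemma brBl x y z : br (x - y) z = br x z - br y z.
Proof. by rewrite brDl brNl. Qed.
Lemma br_suml (I : Type) (r : seq I) (P : pred I) (f : I -> A) z :
  br (\sum_(i <- r | P i) f i) z = \sum_(i <- r | P i) br (f i) z.
Proof.
elim: r => [|i r IH]; first by rewrite !big_nil br0l.
by rewrite !big_cons; case: ifP => _ //; rewrite brDl IH.
Qed.

End Basic.



Section FitS.
Variables (k : fieldType) (A : lmodType k) (br : A -> A -> A).
Hypothesis HL : lie_bracket br.

Lemma span_gen (P : A -> Prop) x : P x -> Defs.span P x.
Proof. by move=> Px V _ HV; apply: HV. Qed.

Lemma ideal_self (S : A -> Prop) : subalgebra br S -> ideal br S S.
Proof. by case=> HS Hb; split. Qed.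

Lemma Fit_sub (S : A -> Prop) x : subalgebra br S -> Fit br S x -> S x.
Proof.
move=> HS HF; apply: HF; first exact: ideal_self.
by move=> y [I [[[HIS _] _] Iy]]; apply: HIS.
Qed.

Lemma Fit_min (S J : A -> Prop) x : ideal br S J ->
  (forall I y, nilpotent_ideal br S I -> I y -> J y) -> Fit br S x -> J x.
Proof. by move=> HJ HI HF; apply: HF => // y [I [HnI Iy]]; exact: HI Iy. Qed.

Lemma nil_Fit (S I : A -> Prop) y : nilpotent_ideal br S I -> I y -> Fit br S y.
Proof. by move=> HI Iy J _ HJ; apply: HJ; exists I. Qed.

Lemma Fit_ideal (S : A -> Prop) : subalgebra br S -> ideal br S (Fit br S).
Proof.
move=> HS; split; first by move=> x; apply: Fit_sub.
split; first split.
- by move=> J [_ [HJ _]] _; apply: subspace0.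
- move=> c x y Fx Fy J HJ Hn; case: (HJ) => _ [[_ HJs] _].
  by apply: HJs; [apply: Fx|apply: Fy].
- move=> x y Fx Sy J HJ Hn; case: (HJ) => _ [_ HJb].
  by apply: HJb => //; apply: Fx.
Qed.

Lemma abelian_nil (S I : A -> Prop) : ideal br S I ->
  (forall x y, I x -> I y -> br x y = 0) -> nilpotent_ideal br S I.
Proof.
move=> HI Hab; split=> //; exists 1%N => x /= Hx.
apply: (Hx (fun z => z = 0)); first exact: subspace_zero.
by move=> z [x' [y' [Ix [Iy ->]]]]; apply: Hab.
Qed.

End FitS.



Section Ext.
Variables (k : fieldType) (A : lmodType k) (F : A -> Prop).
Hypothesis HF : subspace F.

Definition indep (M : A -> Prop) := forall (l : seq A) (c : A -> k), uniq l ->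
  (forall x, x \in l -> M x) -> F (\sum_(x <- l) c x *: x) -> forall x, x \in l -> c x = 0.

Lemma indep_mono (M N : A -> Prop) : (forall x, M x -> N x) -> indep N -> indep M.
Proof. by move=> MN HN l c Hu Hl; apply: HN => // x /Hl /MN. Qed.

Lemma indep_add M s : indep M ->
  (forall l c, (forall x, x \in l -> M x) -> ~ F (s - \sum_(x <- l) c x *: x)) ->
  indep (fun x => M x \/ x = s).
Proof.
move=> HM Hs l c Hu Hl HFs x xl.
have [sl|nsl] := boolP (s \in l); last first.
  apply: (HM l c Hu) => // y yl; case: (Hl y yl) => // ys.
  by move: nsl; rewrite -ys yl.
have Hp := perm_to_rem sl; rewrite (perm_big _ Hp) big_cons /= in HFs.
set l' := rem s l in HFs.
have Hu' : uniq l' by apply: rem_uniq.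
have Hl' : forall y, y \in l' -> M y.
  move=> y; rewrite /l' (mem_rem_uniq _ Hu) inE => /andP [ys yl].
  by case: (Hl y yl) => // /eqP; rewrite (negbTE ys).
have cs0 : c s = 0.
  apply: NNPP => /eqP cs0; apply: (Hs l' (fun y => - ((c s)^-1 * c y)) Hl').
  have -> : \sum_(y <- l') - ((c s)^-1 * c y) *: y = - ((c s)^-1 *: \sum_(y <- l') c y *: y).
    by rewrite scaler_sumr -sumrN; apply: eq_bigr => y _; rewrite scaleNr scalerA.
  rewrite opprK -{1}[s](scale1r) -(mulVf cs0) -scalerA -scalerDr.
  exact: subspaceZ.
rewrite cs0 scale0r add0r in HFs.
have [xs|xs] := eqVneq x s; first by rewrite xs.
apply: (HM l' c Hu' Hl' HFs); rewrite /l' (mem_rem_uniq _ Hu) inE xs xl.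
done.
Qed.

Variables (n : nat) (v : 'I_n -> A).
Hypothesis Hv : forall c : 'I_n -> k, F (\sum_i c i *: v i) -> forall i, c i = 0.

Lemma sum_delta (i : 'I_n) : \sum_l (l == i)%:R *: v l = v i.
Proof.
rewrite (bigD1 i) //= eqxx scale1r big1 ?addr0 // => l /negbTE ->.
by rewrite scale0r.
Qed.

Lemma v_inj : injective v.
Proof.
move=> i j vij; apply/eqP; apply: contraT => nij.
have := Hv (c := fun l => (l == i)%:R - (l == j)%:R).
have -> : \sum_i0 ((i0 == i)%:R - (i0 == j)%:R) *: v i0 = 0.
  under eq_bigr do rewrite scalerBl.
  by rewrite sumrB !sum_delta vij subrr.
move=> /(_ (subspace0 HF) i); rewrite eqxx (negbTE nij) subr0.
by move/eqP; rewrite oner_eq0.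
Qed.

Definition Vimg (x : A) := exists i, x = v i.

Lemma Vimg_indep : indep Vimg.
Proof.
move=> l c Hu Hl HFl.
pose c' i := if v i \in l then c (v i) else 0.
pose r := [seq v i | i <- enum 'I_n & v i \in l].
have Hr : perm_eq l r.
  apply: uniq_perm => //.
    rewrite map_inj_uniq; [by rewrite filter_uniq ?enum_uniq|exact: v_inj].
  move=> x; apply/idP/idP.
    move=> xl; case: (Hl x xl) => i xi; apply/mapP; exists i => //.
    by rewrite mem_filter -xi xl mem_enum.
  by case/mapP => i; rewrite mem_filter => /andP [vil _] ->.
have E : \sum_i c' i *: v i = \sum_(x <- l) c x *: x.
  rewrite (perm_big _ Hr) big_map big_filter big_enum_cond /= [RHS]big_mkcond /=.
  by apply: eq_bigr => i _; rewrite /c'; case: ifP => _ //; rewrite scale0r.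
rewrite -E in HFl; move=> x xl; case: (Hl x xl) => i xi.
by have := Hv HFl i; rewrite /c' -xi xl.
Qed.

Definition PZ (X : classical_sets.set A) := indep (fun x => X x \/ Vimg x).

Lemma chain_ok (G : classical_sets.set (classical_sets.set A)) :
  classical_sets.subset G PZ -> classical_sets.total_on G classical_sets.subset ->
  PZ (classical_sets.bigcup G id).
Proof.
move=> GP Gt l c Hu Hl.
have [X [HX [PX lX]]] : exists X : A -> Prop, ((forall y, ~ X y) \/ G X) /\ PZ X /\
    (forall x, x \in l -> X x \/ Vimg x).
  elim: l {Hu c} Hl => [|y l IH] Hl.
    exists (fun _ => False); split; first by left => y [].
    split; last by move=> x; rewrite in_nil.
    by apply: (indep_mono _ Vimg_indep) => x [].
  have [|X [HX [PX lX]]] := IH.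
    by move=> x xl; apply: Hl; rewrite inE xl orbT.
  case: (Hl y (mem_head _ _)) => [[Y GY /= Yy]|Vy].
    case: HX => [HX|GX].
      exists Y; split; first by right.
      split; first exact: GP.
      move=> x; rewrite inE => /orP [/eqP ->|xl]; first by left.
      by case: (lX x xl) => [/HX []|]; right.
    case: (Gt X Y GX GY) => XY.
      exists Y; split; first by right.
      split; first exact: GP.
      move=> x; rewrite inE => /orP [/eqP ->|xl]; first by left.
      by case: (lX x xl) => [/XY|]; [left|right].
    exists X; split; first by right.
    split=> // x; rewrite inE => /orP [/eqP ->|xl]; first by left; apply: XY.
    exact: lX.
  exists X; split=> //; split=> // x; rewrite inE => /orP [/eqP ->|xl]; first by right.
  exact: lX.
exact: PX.
Qed.

Lemma extend_seq : exists M : A -> Prop, (forall i, M (v i)) /\ indep M /\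
  forall s, exists l (c : A -> k), (forall x, x \in l -> M x) /\ F (s - \sum_(x <- l) c x *: x).
Proof.
have [A0 [PA0 maxA0]] := classical_sets.Zorn_bigcup chain_ok.
exists (fun x => A0 x \/ Vimg x); split; first by move=> i; right; exists i.
split=> // s; apply: NNPP => Hns.
have Hs : forall l c, (forall x, x \in l -> A0 x \/ Vimg x) ->
    ~ F (s - \sum_(x <- l) c x *: x).
  by move=> l c Hl HFs; apply: Hns; exists l, c.
have nA0s : ~ A0 s.
  move=> A0s; apply: (Hs [:: s] (fun _ => 1)).
    by move=> x; rewrite inE => /eqP ->; left.
  by rewrite big_seq1 scale1r subrr; apply: subspace0.
apply: (maxA0 (fun x => A0 x \/ x = s)).
  split; first by move=> x /= ?; left.
  by move=> /(_ s (or_intror erefl)).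
have := indep_add PA0 Hs.
by apply: indep_mono => x [[?|?]|?]; tauto.
Qed.

End Ext.



Section Ext2.
Variables (k : fieldType) (A : lmodType k) (F : A -> Prop).
Hypothesis HF : subspace F.
Variables (n : nat) (v : 'I_n -> A).
Hypothesis Hv : forall c : 'I_n -> k, F (\sum_i c i *: v i) -> forall i, c i = 0.

Lemma extend_basis : exists M : A -> Prop, (forall i, M (v i)) /\
  (forall m (tau : 'I_m -> {x | M x}) (c : 'I_m -> k), injective tau ->
     F (\sum_(i < m) c i *: proj1_sig (tau i)) -> forall i, c i = 0) /\
  (forall s, exists m (tau : 'I_m -> {x | M x}) (c : 'I_m -> k),
     F (s - \sum_(i < m) c i *: proj1_sig (tau i))).
Proof.
have [M [Mv [HM Hsp]]] := extend_seq HF Hv.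
exists M; split=> //; split.
  move=> m tau c tinj HFs.
  have vinj : injective (fun i => proj1_sig (tau i)).
    move=> i j; case Ei: (tau i) => [x Mx]; case Ej: (tau j) => [y My] /= xy.
    apply: tinj; rewrite Ei Ej; subst y; f_equal; exact: proof_irrelevance.
  pose c' (x : A) := if [pick i | proj1_sig (tau i) == x] is Some i then c i else 0.
  have c'E i : c' (proj1_sig (tau i)) = c i.
    rewrite /c'; case: pickP => [j /eqP /vinj -> //|/(_ i)].
    by rewrite eqxx.
  pose l := [seq proj1_sig (tau i) | i <- enum 'I_m].
  have E : \sum_(x <- l) c' x *: x = \sum_(i < m) c i *: proj1_sig (tau i).
    rewrite big_map big_enum /=; apply: eq_bigr => i _; by rewrite c'E.
  move=> i; rewrite -c'E; apply: (HM l c').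
  - by rewrite map_inj_uniq ?enum_uniq.
  - by move=> x /mapP [j _ ->]; case: (tau j).
  - by rewrite E.
  - by apply: map_f; rewrite mem_enum.
move=> s; have [l [c [Hl HFs]]] := Hsp s.
have Mn (i : 'I_(size l)) : M (nth 0 l i) by apply: Hl; apply: mem_nth.
exists (size l), (fun i : 'I_(size l) => exist M (nth 0 l i) (Mn i)), (fun i : 'I_(size l) => c (nth 0 l i)).
rewrite /=.
have -> : \sum_(i < size l) c (nth 0 l i) *: nth 0 l i = \sum_(x <- l) c x *: x.
  by rewrite (big_nth 0) big_mkord.
exact: HFs.
Qed.

End Ext2.



Lemma poly_act0 (k : fieldType) (A : lmodType k) (br : A -> A -> A) (Lambda : Type)
  (a : Lambda -> A) (sigma : 'I_0 -> Lambda) (p : {mpoly k[0]}) b :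
  p != 0 -> b <> 0 -> poly_act br a sigma p b <> 0.
Proof.
move=> pnz bnz; rewrite /poly_act /mon_act enum_ord0 /=.
have Hu := msupp_uniq p.
case E: (msupp p) Hu => [|m0 [|m1 s]] Hu.
- by move/eqP: E; rewrite msupp_eq0 (negbTE pnz).
- rewrite big_seq1 => /eqP; rewrite scaler_eq0 => /orP [|/eqP //].
  by rewrite mcoeff_eq0 E mem_seq1 eqxx.
- have : m0 = m1 by apply/mnmP => -[].
  by move=> e; move: Hu; rewrite e /= inE eqxx.
Qed.

Section Main.
Variables (k : fieldType) (A : lmodType k) (br : A -> A -> A).
Hypothesis HL : lie_bracket br.
Hypothesis HM : metabelian br.
Hypothesis HU : U_algebra br (fun _ => True).

Let FA := Fit br (fun _ : A => True).

Lemma subalgT : subalgebra br (fun _ : A => True).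
Proof. by split. Qed.

Lemma FA_ideal : ideal br (fun _ => True) FA.
Proof. exact: Fit_ideal subalgT. Qed.

Lemma FA_sub : subspace FA.
Proof. by case: FA_ideal => _ []. Qed.

Lemma FA_br x y : FA x -> FA (br x y).
Proof. by case: FA_ideal => _ [_ H] Fx; apply: H. Qed.

Lemma br_in_F u v : FA (br u v).
Proof.
pose Z' z := forall c d, br z (br c d) = 0.
pose I z := Z' z /\ forall w, Z' w -> br z w = 0.
have HI : ideal br (fun _ => True) I.
  split=> //; split; first split.
  - by split=> [c d|w _]; rewrite (br0l HL).
  - move=> c x y [Zx Wx] [Zy Wy]; split.
      by move=> c' d; rewrite (brDl HL) (brZl HL) Zx Zy scaler0 addr0.
    by move=> w Zw; rewrite (brDl HL) (brZl HL) Wx // Wy // scaler0 addr0.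
  - move=> x y [Zx Wx] _; split; first by move=> c d; apply: HM.
    by move=> w Zw; rewrite (br_anti HL) Zw oppr0.
have Hab : forall x y, I x -> I y -> br x y = 0.
  by move=> x y [_ Wx] [Zy _]; apply: Wx.
apply: (nil_Fit (abelian_nil HI Hab)); split; first by move=> c d; apply: HM.
by move=> w Zw; rewrite (br_anti HL) Zw oppr0.
Qed.

Lemma iter_nonzero x b : ~ FA x -> FA b -> b <> 0 ->
  forall m, iter m (fun z => br z x) b <> 0.
Proof.
move=> nFx Fb bnz m.
pose v := fun _ : 'I_1 => x.
have Hv : forall c : 'I_1 -> k, FA (\sum_i c i *: v i) -> forall i, c i = 0.
  move=> c; rewrite big_ord1 /v => Hc i; rewrite (ord1 i).
  apply: NNPP => /eqP cnz; apply: nFx.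
  by rewrite -[x]scale1r -(mulVf cnz) -scalerA; apply: subspaceZ FA_sub Hc.
have [M [Mv [Mind Msp]]] := extend_basis FA_sub Hv.
have Hb : basis_mod_Fit br (fun _ => True) (fun y : {y | M y} => proj1_sig y).
  by split=> //; split.
have tf := (proj2 HU) _ _ Hb.
pose sigma := fun _ : 'I_1 => exist M x (Mv ord0).
have sinj : injective sigma by move=> i j _; rewrite (ord1 i) (ord1 j).
have pnz : ('X_[U_(ord0) *+ m] : {mpoly k[1]}) != 0.
  by rewrite -msupp_eq0 msuppX.
have := tf 1%N sigma sinj _ pnz b Fb bnz.
rewrite /poly_act msuppX big_seq1 mcoeffX eqxx scale1r /mon_act enum_ordSl enum_ord0 /=.
by rewrite mulmnE mnm1E eqxx mul1n.
Qed.

Lemma FB_ideal (B : A -> Prop) : subalgebra br B ->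
  ideal br B (fun y => FA y /\ B y).
Proof.
move=> HB; split; first by move=> x [].
split; first by apply: subspaceI; [exact: FA_sub|case: HB].
move=> x y [Fx Bx] By; split; first exact: FA_br.
by case: HB => _ H; apply: H.
Qed.

Lemma nil_in_F (B : A -> Prop) : subalgebra br B -> forall u v, B u -> B v ->
  br u v <> 0 -> forall I y, nilpotent_ideal br B I -> I y -> FA y.
Proof.
move=> HB u v Bu Bv nz I y [HI [N HN]] Iy; apply: NNPP => nFy.
pose b := br u v.
have Bb : B b by case: HB => _ H; apply: H.
have Hit : forall j, lcs br I j (iter j.+1 (fun z => br z y) b).
  elim=> [|j IH] /=.
    rewrite (br_anti HL); case: HI => _ [HIs HIb].
    by apply: subspaceN => //; apply: HIb.
  by apply: (@span_gen _ _ (fun z => exists x y0, lcs br I j x /\ I y0 /\ z = br x y0)); exists (iter j.+1 (fun z => br z y) b), y.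
exact: (iter_nonzero nFy (br_in_F u v) nz (HN _ (Hit N))).
Qed.

Lemma FB_in_F (B : A -> Prop) : subalgebra br B -> forall u v, B u -> B v ->
  br u v <> 0 -> forall y, Fit br B y -> FA y /\ B y.
Proof.
move=> HB u v Bu Bv nz y; apply: (@Fit_min _ _ br B (fun y => FA y /\ B y)); first exact: FB_ideal.
move=> I z HI Iz; split; first exact: (nil_in_F HB Bu Bv nz HI Iz).
by case: HI => [[H _] _]; apply: H.
Qed.

Lemma FAB_in_FB (B : A -> Prop) : subalgebra br B -> forall y, FA y -> B y -> Fit br B y.
Proof.
move=> HB y Fy By; apply: (@nil_Fit _ _ br B (fun y => FA y /\ B y)) => //.
apply: abelian_nil => //; first exact: FB_ideal.
by move=> x z [Fx _] [Fz _]; apply: (proj1 HU).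
Qed.

Lemma main_B (B : A -> Prop) : subalgebra br B -> U_algebra br B.
Proof.
move=> HB.
have [[u [v [Bu [Bv nz]]]]|hab] :=
  classic (exists u v, B u /\ B v /\ br u v <> 0); last first.
  have ab : forall x y, B x -> B y -> br x y = 0.
    by move=> x y Bx By; apply: NNPP => nz; apply: hab; exists x, y.
  split; first by move=> x y Fx Fy; apply: ab; apply: (Fit_sub HB).
  move=> Lambda a [Ba [Hind _]] [|n] sigma sinj p pnz b Fb bnz.
    exact: poly_act0.
  exfalso.
  have BF : forall y, B y -> Fit br B y.
    move=> y By; apply: (nil_Fit (I := B)) => //.
    by apply: abelian_nil => //; apply: ideal_self.
  have := Hind 1%N (fun _ => sigma ord0) (fun _ => 1).
  have tinj : injective (fun _ : 'I_1 => sigma ord0) by move=> i j _; rewrite (ord1 i) (ord1 j).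
  move=> /(_ tinj); rewrite big_ord1 scale1r => /(_ (BF _ (Ba _)) ord0) /eqP.
  by rewrite oner_eq0.
split.
  move=> x y Fx Fy; apply: (proj1 HU).
    exact: (proj1 (FB_in_F HB Bu Bv nz Fx)).
  exact: (proj1 (FB_in_F HB Bu Bv nz Fy)).
move=> Lambda a [Ba [Hind _]] n sigma sinj p pnz b Fb bnz.
have FAb := proj1 (FB_in_F HB Bu Bv nz Fb).
pose w := fun i => a (sigma i).
have Hw : forall c : 'I_n -> k, FA (\sum_i c i *: w i) -> forall i, c i = 0.
  move=> c Hc; apply: (Hind n sigma c sinj); apply: (FAB_in_FB HB Hc).
  apply: subspace_sum => [|i _]; first by case: HB => [].
  by apply: subspaceZ; [case: HB|apply: Ba].
have winj := v_inj FA_sub Hw.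
have [M [Mv [Mind Msp]]] := extend_basis FA_sub Hw.
have Hb : basis_mod_Fit br (fun _ => True) (fun y : {y | M y} => proj1_sig y).
  by split=> //; split.
have tf := (proj2 HU) _ _ Hb.
pose sigma' := fun i => exist M (w i) (Mv i).
have sinj' : injective sigma' by move=> i j /(congr1 (@proj1_sig _ _)) /winj.
exact: (tf n sigma' sinj' p pnz b FAb bnz).
Qed.

End Main.

Theorem lemma3p2p2 (k : fieldType) (A : lmodType k) (br : A -> A -> A) :
  lie_bracket br -> metabelian br -> U_algebra br (fun _ => True) ->
  forall B : A -> Prop, subalgebra br B -> U_algebra br B.
Proof. by move=> HL HM HU B HB; apply: main_B. Qed.
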